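(* Let $b=2$, $\gamma\in(1/2,1)$ and $\psi(x)=-2\pi\sin(2\pi x)$. If $\gamma^3\le\sqrt2/8$, then $e(1)=1$.
   Context: $\mathcal{A}=\{0,1\}$. $S(x,\mathbf{i})=\sum_{n\ge1}\gamma^{n-1}\psi\big(\frac{x+i_1+i_22+\cdots+i_n2^{n-1}}{2^n}\big)$ for $\mathbf{i}\in\mathcal{A}^{\mathbb{Z}^+}$, $S'=\partial_xS$. Sequences $\mathbf{i},\mathbf{j}$ are $(\varepsilon,\delta)$-tangent at $x_0$ if $|S(x_0,\mathbf{i})-S(x_0,\mathbf{j})|\le\varepsilon$ and $|S'(x_0,\mathbf{i})-S'(x_0,\mathbf{j})|\le\delta$. $E(q,x_0;\varepsilon,\delta)$: pairs $(\mathbf{k},\mathbf{l})\in\mathcal{A}^q\times\mathcal{A}^q$ such that some concatenations $\mathbf{ku},\mathbf{lv}$ ($\mathbf{u},\mathbf{v}\in\mathcal{A}^{\mathbb{Z}^+}$) are $(\varepsilon,\delta)$-tangent at $x_0$. For $J\subset\mathbb{R}$: $E(q,J)=\bigcap_{\varepsilon,\delta>0}\bigcup_{x\in J}E(q,x;\varepsilon,\delta)$, $e(q,J)=\max_{\mathbf{k}}\#\{\mathbf{l}:(\mathbf{k},\mathbf{l})\in E(q,J)\}$, and $e(q)=\lim_{p\to\infty}\max_{0\le k<2^p}e(q,[k/2^p,(k+1)/2^p])$. *)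

(* Defs.v *)
From Stdlib Require Import Reals Lra List Classical ClassicalEpsilon.
Import ListNotations.
Open Scope R_scope.

Definition psi (x : R) : R := - 2 * PI * sin (2 * PI * x).

(* A sequence i in {0,1}^{Z+} is encoded as  i : nat -> bool  with
   i_1 = i 0, i_2 = i 1, ...  (true = 1, false = 0). *)
Definition digit (c : bool) : R := if c then 1 else 0.

Fixpoint dsum (i : nat -> bool) (n : nat) : R :=
  match n with
  | O => 0
  | S m => dsum i m + digit (i m) * 2 ^ m
  end.

(* (m+1)-th term (m = n-1) of the series S(x,i):
   gamma^(n-1) psi((x + i_1 + i_2 2 + ... + i_n 2^(n-1)) / 2^n) *)
Definition Sterm (gamma x : R) (i : nat -> bool) (m : nat) : R :=
  gamma ^ m * psi ((x + dsum i (S m)) / 2 ^ (S m)).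

Definition Sfun (gamma x : R) (i : nat -> bool) : R :=
  epsilon (inhabits 0) (fun l => infinite_sum (Sterm gamma x i) l).

Definition Sder (gamma x : R) (i : nat -> bool) : R :=
  epsilon (inhabits 0)
    (fun l => derivable_pt_lim (fun y => Sfun gamma y i) x l).

Definition tangent (gamma x0 eps del : R) (i j : nat -> bool) : Prop :=
  Rabs (Sfun gamma x0 i - Sfun gamma x0 j) <= eps /\
  Rabs (Sder gamma x0 i - Sder gamma x0 j) <= del.

Definition concat (k : list bool) (u : nat -> bool) : nat -> bool :=
  fun n => if Nat.ltb n (length k) then nth n k false else u (n - length k)%nat.

Fixpoint all_words (q : nat) : list (list bool) :=
  match q with
  | O => [ [] ]
  | S q' => map (cons false) (all_words q') ++ map (cons true) (all_words q')
  end.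

Definition Ept (gamma : R) (q : nat) (x0 eps del : R) (k l : list bool) : Prop :=
  length k = q /\ length l = q /\
  exists u v : nat -> bool, tangent gamma x0 eps del (concat k u) (concat l v).

Definition EJ (gamma : R) (q : nat) (J : R -> Prop) (k l : list bool) : Prop :=
  forall eps del, 0 < eps -> 0 < del ->
    exists x, J x /\ Ept gamma q x eps del k l.

Definition decide (P : Prop) : bool :=
  if excluded_middle_informative P then true else false.

Definition eJk (gamma : R) (q : nat) (J : R -> Prop) (k : list bool) : nat :=
  length (filter (fun l => decide (EJ gamma q J k l)) (all_words q)).

Definition eJ (gamma : R) (q : nat) (J : R -> Prop) : nat :=
  fold_right Nat.max 0%nat (map (eJk gamma q J) (all_words q)).

Definition dyadic (p k : nat) : R -> Prop :=
  fun x => INR k / 2 ^ p <= x <= (INR k + 1) / 2 ^ p.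

Definition emax (gamma : R) (q p : nat) : nat :=
  fold_right Nat.max 0%nat (map (fun k => eJ gamma q (dyadic p k)) (seq 0 (2 ^ p))).

Definition e_eq (gamma : R) (q m : nat) : Prop :=
  Un_cv (fun p => INR (emax gamma q p)) (INR m).

(* Main.v *)
From Stdlib Require Import Reals Lra Lia List Classical ClassicalEpsilon Ranalysis5.
From Coquelicot Require Import Coquelicot.
Require Import Defs.
Import ListNotations.
Open Scope R_scope.

Lemma pow_le_one x n : 0 <= x <= 1 -> x ^ n <= 1.
Proof. intros H. induction n; simpl. lra. pose proof (pow_le x n (proj1 H)). nra. Qed.

Lemma pow_small (r y : R) : 0 <= r < 1 -> 0 < y -> exists N, forall n, (n >= N)%nat -> r ^ n < y.
Proof.
  intros Hr Hy. destruct (pow_lt_1_zero r ltac:(rewrite Rabs_pos_eq; lra) y Hy) as [N HN].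
  exists N. intros n Hn. specialize (HN n Hn). rewrite Rabs_pos_eq in HN; auto. apply pow_le; lra.
Qed.

Lemma sum_tail_aux (f : nat -> R) (C r : R) : 0 <= r < 1 ->
  (forall m, Rabs (f m) <= C * r ^ m) ->
  forall n k, Rabs (sum_f_R0 f (n + k) - sum_f_R0 f n) <= C * r ^ (S n) * (1 - r ^ k) / (1 - r).
Proof.
  intros Hr Hf n k. induction k.
  - rewrite Nat.add_0_r. replace (sum_f_R0 f n - sum_f_R0 f n) with 0 by ring.
    rewrite Rabs_R0. simpl. unfold Rdiv. rewrite Rminus_diag. lra.
  - rewrite Nat.add_succ_r. simpl sum_f_R0.
    replace (sum_f_R0 f (n + k) + f (S (n + k)) - sum_f_R0 f n)
      with ((sum_f_R0 f (n + k) - sum_f_R0 f n) + f (S (n + k))) by ring.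
    eapply Rle_trans. apply Rabs_triang.
    eapply Rle_trans. apply Rplus_le_compat. exact IHk. apply Hf.
    replace (S (n + k)) with (S n + k)%nat by lia. rewrite pow_add.
    right. simpl. field. lra.
Qed.

Lemma C_nonneg (f : nat -> R) (C r : R) : (forall m, Rabs (f m) <= C * r ^ m) -> 0 <= C.
Proof. intros Hf. specialize (Hf 0%nat). simpl in Hf. pose proof (Rabs_pos (f 0%nat)). lra. Qed.

Lemma sum_tail (f : nat -> R) (C r : R) : 0 <= r < 1 ->
  (forall m, Rabs (f m) <= C * r ^ m) ->
  forall n m, (n <= m)%nat -> Rabs (sum_f_R0 f m - sum_f_R0 f n) <= C * r ^ (S n) / (1 - r).
Proof.
  intros Hr Hf n m Hnm. replace m with (n + (m - n))%nat by lia.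
  eapply Rle_trans. apply (sum_tail_aux f C r Hr Hf).
  pose proof (C_nonneg f C r Hf). pose proof (pow_le r (S n) (proj1 Hr)).
  pose proof (pow_le r (m - n) (proj1 Hr)).
  unfold Rdiv. apply Rmult_le_compat_r. apply Rlt_le, Rinv_0_lt_compat; lra.
  assert (0 <= C * r ^ S n) by (apply Rmult_le_pos; lra). nra.
Qed.

Lemma cv_abs_bound (u : nat -> R) (l a b : R) (n : nat) : Un_cv u l ->
  (forall m, (n <= m)%nat -> Rabs (u m - a) <= b) -> Rabs (l - a) <= b.
Proof.
  intros Hu Hb. destruct (Rle_or_lt (Rabs (l - a)) b) as [H|H]; auto. exfalso.
  destruct (Hu (Rabs (l - a) - b) ltac:(lra)) as [N HN].
  specialize (HN (max N n) ltac:(lia)). specialize (Hb (max N n) ltac:(lia)).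
  unfold Rdist in HN.
  pose proof (Rabs_triang (l - u (max N n)) (u (max N n) - a)).
  replace (l - u (max N n) + (u (max N n) - a)) with (l - a) in H0 by ring.
  rewrite Rabs_minus_sym in HN. lra.
Qed.

Lemma cv_upper (u : nat -> R) (l b : R) : Un_cv u l -> (forall n, u n <= b) -> l <= b.
Proof.
  intros Hu Hb. destruct (Rle_or_lt l b) as [H|H]; auto. exfalso.
  destruct (Hu (l - b) ltac:(lra)) as [N HN]. specialize (HN N (le_n N)). specialize (Hb N).
  unfold Rdist in HN. pose proof (Rle_abs (l - u N)). rewrite Rabs_minus_sym in HN. lra.
Qed.

Lemma cv_lower (u : nat -> R) (l b : R) : Un_cv u l -> (forall n, b <= u n) -> b <= l.
Proof.
  intros Hu Hb. destruct (Rle_or_lt b l) as [H|H]; auto. exfalso.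
  destruct (Hu (b - l) ltac:(lra)) as [N HN]. specialize (HN N (le_n N)). specialize (Hb N).
  unfold Rdist in HN. pose proof (Rle_abs (u N - l)). lra.
Qed.

Lemma ser_exists (f : nat -> R) (C r : R) : 0 <= r < 1 ->
  (forall m, Rabs (f m) <= C * r ^ m) -> exists l, Un_cv (sum_f_R0 f) l.
Proof.
  intros Hr Hf. assert (Cauchy_crit_series f) as Hc.
  { intros eps Heps. pose proof (C_nonneg f C r Hf).
    destruct (pow_small r (eps * (1 - r) / (2 * (C + 1))) Hr) as [N HN].
    { apply Rmult_lt_0_compat. nra. apply Rinv_0_lt_compat. lra. }
    exists N. intros n m Hn Hm. unfold Rdist.
    pose proof (sum_tail f C r Hr Hf N n Hn). pose proof (sum_tail f C r Hr Hf N m Hm).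
    specialize (HN N (le_n N)).
    assert (C * r ^ S N / (1 - r) < eps / 2).
    { simpl. pose proof (pow_le r N (proj1 Hr)).
      assert (r ^ N * (2 * (C + 1)) < eps * (1 - r)).
      { apply (Rmult_lt_reg_r (/ (2 * (C + 1)))). apply Rinv_0_lt_compat; lra.
        rewrite Rmult_assoc, Rinv_r by lra. lra. }
      assert (0 <= C * r ^ N) by (apply Rmult_le_pos; lra).
      assert (C * (r * r ^ N) < eps / 2 * (1 - r)) by nra.
      apply (Rmult_lt_reg_r (1 - r)). lra. unfold Rdiv.
      replace (C * (r * r ^ N) * / (1 - r) * (1 - r)) with (C * (r * r ^ N)) by (field; lra).
      lra. }
    replace (sum_f_R0 f n - sum_f_R0 f m) with
      ((sum_f_R0 f n - sum_f_R0 f N) - (sum_f_R0 f m - sum_f_R0 f N)) by ring.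
    eapply Rle_lt_trans. apply Rabs_triang. rewrite Rabs_Ropp. lra. }
  destruct (cv_cauchy_2 f Hc) as [l Hl]. exists l. exact Hl.
Qed.

Definition limS (f : nat -> R) : R := epsilon (inhabits 0) (fun l => Un_cv (sum_f_R0 f) l).

Lemma limS_spec (f : nat -> R) (C r : R) : 0 <= r < 1 ->
  (forall m, Rabs (f m) <= C * r ^ m) -> Un_cv (sum_f_R0 f) (limS f).
Proof. intros Hr Hf. unfold limS. apply epsilon_spec. eapply ser_exists; eauto. Qed.

Lemma limS_tail (f : nat -> R) (C r : R) : 0 <= r < 1 ->
  (forall m, Rabs (f m) <= C * r ^ m) -> forall n, Rabs (limS f - sum_f_R0 f n) <= C * r ^ (S n) / (1 - r).
Proof.
  intros Hr Hf n. apply (cv_abs_bound (sum_f_R0 f) _ _ _ n (limS_spec f C r Hr Hf)).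
  intros m Hm. apply sum_tail; auto.
Qed.

Lemma potential (r : R) (v G : nat -> R) : 0 <= r ->
  (forall m, r * (v (S m) + G (S m)) <= G m) -> (forall m, 0 <= G m) ->
  forall N, sum_f_R0 (fun m => r ^ m * v m) N <= v 0%nat + G 0%nat.
Proof.
  intros Hr Hk HG.
  assert (forall N, sum_f_R0 (fun m => r ^ m * v m) N <= v 0%nat + G 0%nat - r ^ N * G N).
  { induction N; simpl.
    - lra.
    - specialize (Hk N). pose proof (pow_le r N Hr). nra. }
  intros N. specialize (H N). pose proof (pow_le r N Hr). specialize (HG N). nra.
Qed.

Definition Y (x : R) (i : nat -> bool) (m : nat) : R := (x + dsum i (S m)) / 2 ^ (S m).
Definition Sd (gamma x : R) (i : nat -> bool) (m : nat) : R :=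
  gamma ^ m * (-(4*PI*PI) * cos (2*PI*Y x i m)) / 2 ^ (S m).
Definition SD (gamma x : R) (i : nat -> bool) : R := limS (Sd gamma x i).

Lemma psi_bound y : Rabs (psi y) <= 2 * PI.
Proof. unfold psi. pose proof PI_RGT_0. rewrite Rabs_mult.
  replace (Rabs (-2 * PI)) with (2 * PI) by (rewrite Rabs_left; lra).
  assert (Rabs (sin (2*PI*y)) <= 1) by (apply Rabs_le; apply SIN_bound).
  nra.
Qed.

Lemma Sterm_bound gamma x i m : 0 < gamma -> Rabs (Sterm gamma x i m) <= 2 * PI * gamma ^ m.
Proof. intros Hg. unfold Sterm. rewrite Rabs_mult, Rabs_pos_eq by (apply pow_le; lra).
  pose proof (psi_bound ((x + dsum i (S m)) / 2 ^ S m)). pose proof (pow_le gamma m ltac:(lra)). nra. Qed.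

Lemma Sd_bound gamma x i m : 0 < gamma -> Rabs (Sd gamma x i m) <= 2 * PI * PI * (gamma / 2) ^ m.
Proof. intros Hg. unfold Sd. pose proof PI_RGT_0.
  assert (Rabs (cos (2*PI*Y x i m)) <= 1) by (apply Rabs_le; apply COS_bound).
  assert (E : (gamma / 2) ^ m = gamma ^ m / 2 ^ m) by (unfold Rdiv; rewrite Rpow_mult_distr, pow_inv; ring).
  rewrite E. simpl pow. pose proof (pow_lt 2 m ltac:(lra)). pose proof (pow_le gamma m ltac:(lra)).
  unfold Rdiv. rewrite !Rabs_mult.
  rewrite (Rabs_pos_eq (gamma ^ m)) by lra.
  rewrite (Rabs_pos_eq (/ (2 * 2 ^ m))) by (apply Rlt_le, Rinv_0_lt_compat; lra).
  rewrite Rabs_Ropp, (Rabs_pos_eq (4 * PI * PI)) by nra.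
  assert (0 <= / (2 * 2 ^ m)) by (apply Rlt_le, Rinv_0_lt_compat; lra).
  replace (2 * PI * PI * (gamma ^ m * / 2 ^ m)) with (gamma ^ m * (4 * PI * PI * 1) * / (2 * 2 ^ m)) by (field; lra).
  apply Rmult_le_compat_r; auto. apply Rmult_le_compat_l; auto.
  apply Rmult_le_compat_l; auto. nra.
Qed.

Lemma Sfun_cv gamma x i : 0 < gamma < 1 -> Un_cv (sum_f_R0 (Sterm gamma x i)) (Sfun gamma x i).
Proof. intros Hg. unfold Sfun. apply (epsilon_spec (inhabits 0) (fun l => infinite_sum (Sterm gamma x i) l)).
  apply (ser_exists _ (2 * PI) gamma). lra. intros m. apply Sterm_bound; lra.
Qed.

Lemma Sd_cv gamma x i : 0 < gamma < 1 -> Un_cv (sum_f_R0 (Sd gamma x i)) (SD gamma x i).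
Proof. intros Hg. unfold SD. apply (limS_spec _ (2*PI*PI) (gamma/2)). lra. intros m. apply Sd_bound; lra. Qed.

Lemma Sd_tail gamma x i n : 0 < gamma < 1 ->
  Rabs (SD gamma x i - sum_f_R0 (Sd gamma x i) n) <= 2*PI*PI * (gamma/2) ^ (S n) / (1 - gamma/2).
Proof. intros Hg. unfold SD. apply limS_tail. lra. intros m. apply Sd_bound; lra. Qed.

Lemma Sterm_deriv gamma y i m :
  derivable_pt_lim (fun z => Sterm gamma z i m) y (Sd gamma y i m).
Proof.
  unfold Sterm, Sd, Y, psi. set (D := dsum i (S m)). apply is_derive_Reals. auto_derive. auto.
  change (2^S m) with (2*2^m). unfold Rdiv. field. apply pow_nonzero. lra.
Qed.

Lemma Sd_cont gamma i m y : continuity_pt (fun z => Sd gamma z i m) y.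
Proof. unfold Sd, Y. reg. Qed.

Lemma psum_deriv gamma y i n :
  derivable_pt_lim (fun z => sum_f_R0 (Sterm gamma z i) n) y (sum_f_R0 (Sd gamma y i) n).
Proof.
  induction n.
  - simpl. apply Sterm_deriv.
  - simpl. apply (derivable_pt_lim_plus (fun z => sum_f_R0 (Sterm gamma z i) n) (fun z => Sterm gamma z i (S n))).
    exact IHn. apply Sterm_deriv.
Qed.

Lemma psum_cont gamma i n y : continuity_pt (fun z => sum_f_R0 (Sd gamma z i) n) y.
Proof.
  induction n.
  - simpl. apply Sd_cont.
  - simpl. apply (continuity_pt_plus (fun z => sum_f_R0 (Sd gamma z i) n) (fun z => Sd gamma z i (S n))).
    exact IHn. apply Sd_cont.
Qed.

Lemma SD_CVU gamma i c (r : posreal) : 0 < gamma < 1 ->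
  CVU (fun n z => sum_f_R0 (Sd gamma z i) n) (fun z => SD gamma z i) c r.
Proof.
  intros Hg eps Heps. pose proof PI_RGT_0.
  set (K := 2*PI*PI / (1 - gamma/2)).
  assert (HK : 0 < K) by (unfold K; apply Rdiv_lt_0_compat; nra).
  destruct (pow_small (gamma/2) (eps / K) ltac:(lra) ltac:(apply Rdiv_lt_0_compat; lra)) as [N HN].
  exists N. intros n z Hn _. eapply Rle_lt_trans. apply Sd_tail; auto.
  specialize (HN (S n) ltac:(lia)).
  replace (2 * PI * PI * (gamma / 2) ^ S n / (1 - gamma / 2)) with (K * (gamma / 2) ^ S n) by (unfold K; field; lra).
  apply (Rmult_lt_reg_r (/ K)). apply Rinv_0_lt_compat; lra.
  replace (K * (gamma / 2) ^ S n * / K) with ((gamma/2) ^ S n) by (field; lra). exact HN.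
Qed.

Lemma Sfun_deriv gamma x i : 0 < gamma < 1 ->
  derivable_pt_lim (fun y => Sfun gamma y i) x (SD gamma x i).
Proof.
  intros Hg.
  apply (derivable_pt_lim_CVU (fun n z => sum_f_R0 (Sterm gamma z i) n) (fun n z => sum_f_R0 (Sd gamma z i) n)
    (fun y => Sfun gamma y i) (fun z => SD gamma z i) x x (mkposreal 1 Rlt_0_1)).
  - apply Boule_center.
  - intros y n _. apply psum_deriv.
  - intros y _. apply Sfun_cv; auto.
  - apply SD_CVU; auto.
  - intros y Hy. apply (CVU_continuity (fun n z => sum_f_R0 (Sd gamma z i) n) _ x (mkposreal 1 Rlt_0_1)). apply SD_CVU; auto.
    intros n z _. apply psum_cont. exact Hy.
Qed.

Lemma Sder_eq gamma x i : 0 < gamma < 1 -> Sder gamma x i = SD gamma x i.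
Proof.
  intros Hg. unfold Sder.
  apply (uniqueness_limite (fun y => Sfun gamma y i) x).
  - apply (epsilon_spec (inhabits 0) (fun l => derivable_pt_lim (fun y => Sfun gamma y i) x l)).
    exists (SD gamma x i). apply Sfun_deriv; auto.
  - apply Sfun_deriv; auto.
Qed.
Definition Fq (c s : R) : R := 807/1000 - 19/100*c - 88/1000*s - 146/10000*(c^2 - s^2) - 19/1000*(2*c*s).
Lemma circ_abs_k k s : k^2+s^2 = 1 -> Rabs k <= 1.
Proof. intros H. apply Rabs_le. nra. Qed.
Lemma circ_abs_s k s : k^2+s^2 = 1 -> Rabs s <= 1.
Proof. intros H. apply Rabs_le. nra. Qed.

Lemma Rabs_le_fact x : -(Rabs x) <= x <= Rabs x.
Proof. unfold Rabs; destruct (Rcase_abs x); lra. Qed.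
Lemma mono_bound k s (i j : nat) : Rabs k <= 1 -> Rabs s <= 1 -> -1 <= k^i*s^j <= 1.
Proof. intros Hk Hs.
  assert (H: Rabs (k^i*s^j) <= 1).
  { rewrite Rabs_mult, <- !RPow_abs.
    pose proof (pow_le_one (Rabs k) i (conj (Rabs_pos k) Hk)).
    pose proof (pow_le_one (Rabs s) j (conj (Rabs_pos s) Hs)).
    pose proof (pow_le (Rabs k) i (Rabs_pos k)).
    pose proof (pow_le (Rabs s) j (Rabs_pos s)). nra. }
  destruct (Rabs_le_fact (k^i*s^j)); lra.
Qed.
Lemma K1_half k s : k^2+s^2 = 1 -> (1/2)*(s + Fq k s) <= Fq (k^2-s^2) (2*k*s).
Proof.
  intros Hc.
  assert (Hk : Rabs k <= 1) by (apply circ_abs_k with s; exact Hc).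
  assert (Hs : Rabs s <= 1) by (apply circ_abs_s with k; exact Hc).
  assert (Hid : Fq (k^2-s^2) (2*k*s) - (1/2)*(s + Fq k s) = ((-83/5000)*(k^0*s^0) + (-81/5000)*(k^0*s^1) + (2051/10000)*(k^0*s^2) + (-1689/5000)*(k^0*s^3) + (4399/10000)*(k^0*s^4) + (-139/10000)*(k^1*s^0) + (879/5000)*(k^1*s^1) + (-2109/10000)*(k^1*s^2) + (-2051/10000)*(k^2*s^0) + (5067/5000)*(k^2*s^1) + (-13197/5000)*(k^2*s^2) + (703/10000)*(k^3*s^0) + (4399/10000)*(k^4*s^0))^2 + ((-27/1250)*(k^0*s^0) + (-139/10000)*(k^0*s^1) + (879/10000)*(k^0*s^2) + (-703/10000)*(k^0*s^3) + (81/5000)*(k^1*s^0) + (-2051/5000)*(k^1*s^1) + (5067/5000)*(k^1*s^2) + (-4399/2500)*(k^1*s^3) + (-879/10000)*(k^2*s^0) + (2109/10000)*(k^2*s^1) + (-1689/5000)*(k^3*s^0) + (4399/2500)*(k^3*s^1))^2 + ((3991211/100000000)*(k^0*s^0) + (1803/25000000)*(k^0*s^1) + (947/12500000)*(k^1*s^0) + (-93/25000000)*(k^1*s^1) + (259/6250000)*(k^2*s^0) + (-21/6250000)*(k^2*s^1) + (-1489/12500000)*(k^3*s^0) + (23/781250)*(k^3*s^1) + (117/3125000)*(k^4*s^0)) + (k^2+s^2-1)*((-36284577/100000000)*(k^0*s^0) + (11430261/25000000)*(k^0*s^1) + (-6946209/12500000)*(k^0*s^2) + (924747/2000000)*(k^0*s^3)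 + (-192582/390625)*(k^0*s^4) + (7429911/25000000)*(k^0*s^5) + (-19351201/100000000)*(k^0*s^6) + (-475813/5000000)*(k^1*s^0) + (4222009/25000000)*(k^1*s^1) + (-6454289/50000000)*(k^1*s^2) + (3866721/25000000)*(k^1*s^3) + (-3092497/50000000)*(k^1*s^4) + (-1056513/6250000)*(k^2*s^0) + (20268123/50000000)*(k^2*s^1) + (-15628147/25000000)*(k^2*s^2) + (7429911/12500000)*(k^2*s^3) + (-58053603/100000000)*(k^2*s^4) + (-801689/10000000)*(k^3*s^0) + (3866721/25000000)*(k^3*s^1) + (-3092497/25000000)*(k^3*s^2) + (-3302899/25000000)*(k^4*s^0) + (7429911/25000000)*(k^4*s^1) + (-58053603/100000000)*(k^4*s^2) + (-3092497/50000000)*(k^5*s^0) + (-19351201/100000000)*(k^6*s^0))) by (unfold Fq; field).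
  pose proof (mono_bound k s 0 1 Hk Hs).
  pose proof (mono_bound k s 1 0 Hk Hs).
  pose proof (mono_bound k s 1 1 Hk Hs).
  pose proof (mono_bound k s 2 0 Hk Hs).
  pose proof (mono_bound k s 2 1 Hk Hs).
  pose proof (mono_bound k s 3 0 Hk Hs).
  pose proof (mono_bound k s 3 1 Hk Hs).
  pose proof (mono_bound k s 4 0 Hk Hs).
  assert (HE : 0 <= (3991211/100000000)*(k^0*s^0) + (1803/25000000)*(k^0*s^1) + (947/12500000)*(k^1*s^0) + (-93/25000000)*(k^1*s^1) + (259/6250000)*(k^2*s^0) + (-21/6250000)*(k^2*s^1) + (-1489/12500000)*(k^3*s^0) + (23/781250)*(k^3*s^1) + (117/3125000)*(k^4*s^0)) by lra.
  pose proof (pow2_ge_0 ((-83/5000)*(k^0*s^0) + (-81/5000)*(k^0*s^1) + (2051/10000)*(k^0*s^2) + (-1689/5000)*(k^0*s^3) + (4399/10000)*(k^0*s^4) + (-139/10000)*(k^1*s^0) + (879/5000)*(k^1*s^1) + (-2109/10000)*(k^1*s^2) + (-2051/10000)*(k^2*s^0) + (5067/5000)*(k^2*s^1) + (-13197/5000)*(k^2*s^2) + (703/10000)*(k^3*s^0) + (4399/10000)*(k^4*s^0))).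
  pose proof (pow2_ge_0 ((-27/1250)*(k^0*s^0) + (-139/10000)*(k^0*s^1) + (879/10000)*(k^0*s^2) + (-703/10000)*(k^0*s^3) + (81/5000)*(k^1*s^0) + (-2051/5000)*(k^1*s^1) + (5067/5000)*(k^1*s^2) + (-4399/2500)*(k^1*s^3) + (-879/10000)*(k^2*s^0) + (2109/10000)*(k^2*s^1) + (-1689/5000)*(k^3*s^0) + (4399/2500)*(k^3*s^1))).
  assert (Hz : (k^2+s^2-1) = 0) by lra.
  rewrite Hz, Rmult_0_l in Hid.
  lra.
Qed.

Lemma K1_top k s : k^2+s^2 = 1 -> (5613/10000)*(s + Fq k s) <= Fq (k^2-s^2) (2*k*s).
Proof.
  intros Hc.
  assert (Hk : Rabs k <= 1) by (apply circ_abs_k with s; exact Hc).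
  assert (Hs : Rabs s <= 1) by (apply circ_abs_s with k; exact Hc).
  assert (Hid : Fq (k^2-s^2) (2*k*s) - (5613/10000)*(s + Fq k s) = ((-267/10000)*(k^0*s^0) + (-521/10000)*(k^0*s^1) + (113/400)*(k^0*s^2) + (-256/625)*(k^0*s^3) + (2733/10000)*(k^0*s^4) + (-107/2500)*(k^1*s^0) + (299/1250)*(k^1*s^1) + (-2847/10000)*(k^1*s^2) + (-113/400)*(k^2*s^0) + (768/625)*(k^2*s^1) + (-8199/5000)*(k^2*s^2) + (949/10000)*(k^3*s^0) + (2733/10000)*(k^4*s^0))^2 + ((-87/2500)*(k^0*s^0) + (-107/2500)*(k^0*s^1) + (299/2500)*(k^0*s^2) + (-949/10000)*(k^0*s^3) + (521/10000)*(k^1*s^0) + (-113/200)*(k^1*s^1) + (768/625)*(k^1*s^2) + (-2733/2500)*(k^1*s^3) + (-299/2500)*(k^2*s^0) + (2847/10000)*(k^2*s^1) + (-256/625)*(k^3*s^0) + (2733/2500)*(k^3*s^1))^2 + ((196989/100000000)*(k^0*s^0) + (963/50000000)*(k^0*s^1) + (8793/50000000)*(k^1*s^0) + (-2687/12500000)*(k^1*s^1) + (267/5000000)*(k^2*s^0) + (-9/12500000)*(k^2*s^1) + (-2301/12500000)*(k^3*s^0) + (271/1562500)*(k^3*s^1) + (-289/6250000)*(k^4*s^0)) + (k^2+s^2-1)*((-8753427/25000000)*(k^0*s^0) + (12942147/25000000)*(k^0*s^1) + (-55080551/100000000)*(k^0*s^2) + (5064893/10000000)*(k^0*s^3) + (-10147139/25000000)*(k^0*s^4)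 + (87456/390625)*(k^0*s^5) + (-7469289/100000000)*(k^0*s^6) + (-5390589/50000000)*(k^1*s^0) + (4525159/25000000)*(k^1*s^1) + (-208017/1250000)*(k^1*s^2) + (817167/6250000)*(k^1*s^3) + (-2593617/50000000)*(k^1*s^4) + (-561291/4000000)*(k^2*s^0) + (19628893/50000000)*(k^2*s^1) + (-12573553/25000000)*(k^2*s^2) + (174912/390625)*(k^2*s^3) + (-22407867/100000000)*(k^2*s^4) + (-455223/6250000)*(k^3*s^0) + (817167/6250000)*(k^3*s^1) + (-2593617/25000000)*(k^3*s^2) + (-1213207/12500000)*(k^4*s^0) + (87456/390625)*(k^4*s^1) + (-22407867/100000000)*(k^4*s^2) + (-2593617/50000000)*(k^5*s^0) + (-7469289/100000000)*(k^6*s^0))) by (unfold Fq; field).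
  pose proof (mono_bound k s 0 1 Hk Hs).
  pose proof (mono_bound k s 1 0 Hk Hs).
  pose proof (mono_bound k s 1 1 Hk Hs).
  pose proof (mono_bound k s 2 0 Hk Hs).
  pose proof (mono_bound k s 2 1 Hk Hs).
  pose proof (mono_bound k s 3 0 Hk Hs).
  pose proof (mono_bound k s 3 1 Hk Hs).
  pose proof (mono_bound k s 4 0 Hk Hs).
  assert (HE : 0 <= (196989/100000000)*(k^0*s^0) + (963/50000000)*(k^0*s^1) + (8793/50000000)*(k^1*s^0) + (-2687/12500000)*(k^1*s^1) + (267/5000000)*(k^2*s^0) + (-9/12500000)*(k^2*s^1) + (-2301/12500000)*(k^3*s^0) + (271/1562500)*(k^3*s^1) + (-289/6250000)*(k^4*s^0)) by lra.
  pose proof (pow2_ge_0 ((-267/10000)*(k^0*s^0) + (-521/10000)*(k^0*s^1) + (113/400)*(k^0*s^2) + (-256/625)*(k^0*s^3) + (2733/10000)*(k^0*s^4) + (-107/2500)*(k^1*s^0) + (299/1250)*(k^1*s^1) + (-2847/10000)*(k^1*s^2) + (-113/400)*(k^2*s^0) + (768/625)*(k^2*s^1) + (-8199/5000)*(k^2*s^2) + (949/10000)*(k^3*s^0) + (2733/10000)*(k^4*s^0))).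
  pose proof (pow2_ge_0 ((-87/2500)*(k^0*s^0) + (-107/2500)*(k^0*s^1) + (299/2500)*(k^0*s^2) + (-949/10000)*(k^0*s^3) + (521/10000)*(k^1*s^0) + (-113/200)*(k^1*s^1) + (768/625)*(k^1*s^2) + (-2733/2500)*(k^1*s^3) + (-299/2500)*(k^2*s^0) + (2847/10000)*(k^2*s^1) + (-256/625)*(k^3*s^0) + (2733/2500)*(k^3*s^1))).
  assert (Hz : (k^2+s^2-1) = 0) by lra.
  rewrite Hz, Rmult_0_l in Hid.
  lra.
Qed.

Lemma K1_gen g k s : 1/2 <= g <= 5613/10000 -> k^2+s^2 = 1 -> g*(s + Fq k s) <= Fq (k^2-s^2) (2*k*s).
Proof. intros Hg Hc. pose proof (K1_half k s Hc). pose proof (K1_top k s Hc).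
  destruct (Rle_or_lt 0 (s + Fq k s)); nra. Qed.

Lemma Fq_nonneg c s : c^2 + s^2 = 1 -> 0 <= Fq c s.
Proof. intros H. unfold Fq. assert (-1 <= c <= 1) by nra. assert (-1 <= s <= 1) by nra.
  pose proof (pow2_ge_0 (c-s)). pose proof (pow2_ge_0 (c+s)).
  assert (-1 <= 2*c*s <= 1) by nra. assert (-1 <= c^2 - s^2 <= 1) by nra. lra. Qed.

Definition th (x : R) (i : nat -> bool) (m : nat) : R := 2 * PI * Y x i m.

Lemma th_rec x i m : th x i m = 2 * th x i (S m) - 2 * PI * digit (i (S m)).
Proof. unfold th, Y. change (dsum i (S (S m))) with (dsum i (S m) + digit (i (S m)) * 2 ^ (S m)).
  change (2 ^ S (S m)) with (2 * 2 ^ (S m)). field. apply pow_nonzero. lra. Qed.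

Lemma chain x i m : cos (th x i m) = cos (th x i (S m)) ^ 2 - sin (th x i (S m)) ^ 2 /\
                    sin (th x i m) = 2 * cos (th x i (S m)) * sin (th x i (S m)).
Proof.
  rewrite th_rec. destruct (i (S m)); simpl digit.
  - rewrite Rmult_1_r, cos_minus, sin_minus, cos_2PI, sin_2PI, cos_2a, sin_2a. split; ring.
  - rewrite Rmult_0_r, Rminus_0_r, cos_2a, sin_2a. split; ring.
Qed.

Lemma circ a : cos a ^ 2 + sin a ^ 2 = 1.
Proof. pose proof (sin2_cos2 a). unfold Rsqr in H. lra. Qed.

Lemma Sterm_th gamma x i m : Sterm gamma x i m = gamma ^ m * (- 2 * PI * sin (th x i m)).
Proof. reflexivity. Qed.

Lemma Sd_th gamma x i m : Sd gamma x i m = (gamma/2) ^ m * (-2 * PI * PI * cos (th x i m)).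
Proof. unfold Sd, th. unfold Rdiv. rewrite Rpow_mult_distr, pow_inv. simpl pow. field. apply pow_nonzero. lra. Qed.

Lemma sum_opp (f : nat -> R) N : - sum_f_R0 f N = sum_f_R0 (fun m => - f m) N.
Proof. induction N; simpl. ring. rewrite <- IHN. ring. Qed.

Section B.
Variable gamma : R.
Hypothesis Hg : 1/2 < gamma <= 5613/10000.

Lemma U1 x i : Sfun gamma x i <= 2 * PI * (- sin (th x i 0) + Fq (cos (th x i 0)) (- sin (th x i 0))).
Proof.
  pose proof PI_RGT_0.
  apply (cv_upper _ _ _ (Sfun_cv gamma x i ltac:(lra))). intros N.
  rewrite (sum_eq _ (fun m => gamma ^ m * (- 2 * PI * sin (th x i m)))) by (intros; apply Sterm_th).
  eapply Rle_trans. apply (potential gamma (fun m => - 2 * PI * sin (th x i m))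
     (fun m => 2 * PI * Fq (cos (th x i m)) (- sin (th x i m)))). lra.
  - intros m. destruct (chain x i m) as [Hc Hs]. rewrite Hc, Hs.
    pose proof (K1_gen gamma (cos (th x i (S m))) (- sin (th x i (S m))) ltac:(lra)).
    replace ((- sin (th x i (S m)))^2) with (sin (th x i (S m)) ^2) in H0 by ring.
    specialize (H0 (circ _)).
    replace (- (2 * cos (th x i (S m)) * sin (th x i (S m)))) with (2 * cos (th x i (S m)) * - sin (th x i (S m))) by ring.
    nra.
  - intros m. apply Rmult_le_pos. lra. apply Fq_nonneg. replace ((- sin (th x i m))^2) with (sin (th x i m)^2) by ring. apply circ.
  - right. ring.
Qed.

Lemma U2 x i : - Sfun gamma x i <= 2 * PI * (sin (th x i 0) + Fq (cos (th x i 0)) (sin (th x i 0))).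
Proof.
  pose proof PI_RGT_0.
  apply (cv_upper _ _ _ (CV_opp _ _ (Sfun_cv gamma x i ltac:(lra)))). intros N. unfold opp_seq.
  rewrite (sum_eq _ (fun m => gamma ^ m * (- 2 * PI * sin (th x i m)))) by (intros; apply Sterm_th).
  rewrite sum_opp.
  rewrite (sum_eq _ (fun m => gamma ^ m * (2 * PI * sin (th x i m)))) by (intros; ring).
  eapply Rle_trans. apply (potential gamma (fun m => 2 * PI * sin (th x i m))
     (fun m => 2 * PI * Fq (cos (th x i m)) (sin (th x i m)))). lra.
  - intros m. destruct (chain x i m) as [Hc Hs]. rewrite Hc, Hs.
    pose proof (K1_gen gamma (cos (th x i (S m))) (sin (th x i (S m))) ltac:(lra) (circ _)).
    nra.
  - intros m. apply Rmult_le_pos. lra. apply Fq_nonneg. apply circ.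
  - right. ring.
Qed.

Definition Hc := (gamma/2) / (1 - gamma/2).

Lemma D1 x i : SD gamma x i <= - 2 * PI * PI * cos (th x i 0) + 2 * PI * PI * Hc.
Proof.
  pose proof PI_RGT_0.
  apply (cv_upper _ _ _ (Sd_cv gamma x i ltac:(lra))). intros N.
  rewrite (sum_eq _ (fun m => (gamma/2) ^ m * (- 2 * PI * PI * cos (th x i m)))) by (intros; apply Sd_th).
  eapply Rle_trans. apply (potential (gamma/2) (fun m => - 2 * PI * PI * cos (th x i m))
     (fun m => 2 * PI * PI * Hc)). lra.
  - intros m. pose proof (COS_bound (th x i (S m))).
    assert (E : 2 * PI * PI * Hc * (1 - gamma/2) = gamma/2 * (2 * PI * PI)) by (unfold Hc; field; lra).
    assert (0 <= gamma * (PI * PI) * (1 + cos (th x i (S m)))) by (apply Rmult_le_pos; [apply Rmult_le_pos; nra | lra]).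
    assert (0 <= gamma * (PI * PI) * (1 - cos (th x i (S m)))) by (apply Rmult_le_pos; [apply Rmult_le_pos; nra | lra]).
    lra.
  - intros m. unfold Hc. apply Rmult_le_pos. nra. apply Rlt_le, Rdiv_lt_0_compat; lra.
  - right. ring.
Qed.

Lemma D2 x i : - 2 * PI * PI * cos (th x i 0) - 2 * PI * PI * Hc <= SD gamma x i.
Proof.
  pose proof PI_RGT_0.
  apply Ropp_le_cancel.
  apply (cv_upper _ _ _ (CV_opp _ _ (Sd_cv gamma x i ltac:(lra)))). intros N. unfold opp_seq.
  rewrite (sum_eq _ (fun m => (gamma/2) ^ m * (- 2 * PI * PI * cos (th x i m)))) by (intros; apply Sd_th).
  rewrite sum_opp.
  rewrite (sum_eq _ (fun m => (gamma/2) ^ m * (2 * PI * PI * cos (th x i m)))) by (intros; ring).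
  eapply Rle_trans. apply (potential (gamma/2) (fun m => 2 * PI * PI * cos (th x i m))
     (fun m => 2 * PI * PI * Hc)). lra.
  - intros m. pose proof (COS_bound (th x i (S m))).
    assert (E : 2 * PI * PI * Hc * (1 - gamma/2) = gamma/2 * (2 * PI * PI)) by (unfold Hc; field; lra).
    assert (0 <= gamma * (PI * PI) * (1 + cos (th x i (S m)))) by (apply Rmult_le_pos; [apply Rmult_le_pos; nra | lra]).
    assert (0 <= gamma * (PI * PI) * (1 - cos (th x i (S m)))) by (apply Rmult_le_pos; [apply Rmult_le_pos; nra | lra]).
    lra.
  - intros m. unfold Hc. apply Rmult_le_pos. nra. apply Rlt_le, Rdiv_lt_0_compat; lra.
  - right. ring.
Qed.
End B.

Lemma th0_false x u : th x (concat [false] u) 0 = PI * x.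
Proof. unfold th, Y. simpl. unfold digit. field. Qed.

Lemma th0_true x u : th x (concat [true] u) 0 = PI * x + PI.
Proof. unfold th, Y. simpl. unfold digit. field. Qed.

Lemma K3 C S : 0 <= S -> C^2 + S^2 = 1 -> C^2 <= (41/100)^2 ->
  -2*S + Fq C (-S) + Fq (-C) (-S) <= -1/100.
Proof. intros H0 H1 H2. assert (HS : 912/1000 <= S) by nra. unfold Fq. nra. Qed.

Lemma gamma_bound g : 1/2 < g < 1 -> g ^ 3 <= sqrt 2 / 8 -> g <= 5613/10000.
Proof.
  intros Hg H. assert (sqrt 2 < 141422/100000).
  { pose proof (sqrt_pos 2). pose proof (sqrt_sqrt 2 ltac:(lra)). nra. }
  destruct (Rle_or_lt g (5613/10000)); auto. nra.
Qed.

Lemma sep gamma x u v : 1/2 < gamma <= 5613/10000 -> 0 <= x <= 1 ->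
  2*PI/100 <= Rabs (Sfun gamma x (concat [false] u) - Sfun gamma x (concat [true] v)) \/
  4*PI*PI/100 <= Rabs (Sder gamma x (concat [false] u) - Sder gamma x (concat [true] v)).
Proof.
  intros Hg Hx. pose proof PI_RGT_0.
  set (C := cos (PI * x)). set (S := sin (PI * x)).
  assert (HS : 0 <= S) by (apply sin_ge_0; nra).
  assert (HCS : C^2 + S^2 = 1) by apply circ.
  destruct (Rle_or_lt (C^2) ((41/100)^2)) as [Hm|Ho].
  - left.
    pose proof (U1 gamma Hg x (concat [false] u)) as A1.
    pose proof (U2 gamma Hg x (concat [true] v)) as A2.
    rewrite th0_false in A1. rewrite th0_true, neg_sin, neg_cos in A2.
    fold C S in A1, A2.
    pose proof (K3 C S HS HCS Hm).
    assert (2*PI*(-2*S + Fq C (-S) + Fq (-C) (-S)) <= 2*PI*(-1/100)) by (apply Rmult_le_compat_l; lra).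
    rewrite Rabs_left1; lra.
  - right. rewrite !Sder_eq by lra.
    pose proof (D1 gamma Hg x (concat [false] u)) as A1.
    pose proof (D2 gamma Hg x (concat [false] u)) as A2.
    pose proof (D1 gamma Hg x (concat [true] v)) as A3.
    pose proof (D2 gamma Hg x (concat [true] v)) as A4.
    rewrite th0_false in A1, A2. rewrite th0_true, neg_cos in A3, A4. fold C in A1, A2, A3, A4.
    assert (HH : Hc gamma <= 4/10).
    { unfold Hc. apply (Rmult_le_reg_r (1 - gamma/2)). lra. unfold Rdiv. rewrite Rmult_assoc, Rinv_l by lra. lra. }
    assert (0 < PI * PI) by nra.
    destruct (Rle_or_lt 0 C).
    + assert (41/100 <= C) by nra.
      rewrite Rabs_left1. nra. nra.
    + assert (C <= -41/100) by nra.
      rewrite Rabs_pos_eq. nra. nra.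
Qed.

Lemma decide_true (P : Prop) : P -> decide P = true.
Proof. intros H. unfold decide. destruct (excluded_middle_informative P); auto; contradiction. Qed.
Lemma decide_false (P : Prop) : ~ P -> decide P = false.
Proof. intros H. unfold decide. destruct (excluded_middle_informative P); auto; contradiction. Qed.

Lemma dyadic_unit p k x : (k < 2 ^ p)%nat -> dyadic p k x -> 0 <= x <= 1.
Proof.
  intros Hk [H1 H2]. assert (Hp : 0 < 2 ^ p) by (apply pow_lt; lra).
  pose proof (pos_INR k). split.
  - eapply Rle_trans; [|exact H1]. unfold Rdiv; apply Rmult_le_pos; [lra | apply Rlt_le, Rinv_0_lt_compat; lra].
  - eapply Rle_trans; [exact H2|]. apply (Rmult_le_reg_r (2 ^ p)); auto.
    unfold Rdiv. rewrite Rmult_assoc, Rinv_l by lra. rewrite Rmult_1_r, Rmult_1_l.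
    assert (INR (S k) <= INR (2 ^ p)) by (apply le_INR; exact Hk).
    rewrite S_INR, pow_INR in H0. replace (INR 2) with 2 in H0 by (simpl; ring). lra.
Qed.

Lemma EJ_diag gamma p k w : length w = 1%nat -> EJ gamma 1 (dyadic p k) w w.
Proof.
  intros Hw eps del He Hd. exists (INR k / 2 ^ p). split.
  - split. lra. apply Rmult_le_compat_r. apply Rlt_le, Rinv_0_lt_compat, pow_lt; lra. lra.
  - split; [auto|split; [auto|]]. exists (fun _ => false), (fun _ => false).
    unfold tangent. rewrite !Rminus_diag, Rabs_R0. split; lra.
Qed.

Lemma EJ_off gamma p k u0 w0 : 1/2 < gamma <= 5613/10000 -> (k < 2 ^ p)%nat ->
  ((u0 = [false] /\ w0 = [true]) \/ (u0 = [true] /\ w0 = [false])) ->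
  ~ EJ gamma 1 (dyadic p k) u0 w0.
Proof.
  intros Hg Hk Huw HE. pose proof PI_RGT_0.
  destruct (HE (PI/100) (2*PI*PI/100) ltac:(lra) ltac:(nra)) as [x [Jx [_ [_ [u [v [T1 T2]]]]]]].
  pose proof (dyadic_unit p k x Hk Jx) as Hx.
  destruct Huw as [[-> ->]|[-> ->]].
  - destruct (sep gamma x u v Hg Hx); nra.
  - rewrite Rabs_minus_sym in T1, T2. destruct (sep gamma x v u Hg Hx); nra.
Qed.

Lemma eJ_one gamma p k : 1/2 < gamma <= 5613/10000 -> (k < 2 ^ p)%nat -> eJ gamma 1 (dyadic p k) = 1%nat.
Proof.
  intros Hg Hk. unfold eJ, eJk. simpl all_words. simpl map. simpl filter.
  rewrite (decide_true (EJ gamma 1 (dyadic p k) [false] [false])) by (apply EJ_diag; reflexivity).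
  rewrite (decide_false (EJ gamma 1 (dyadic p k) [false] [true])) by (apply EJ_off; auto).
  rewrite (decide_false (EJ gamma 1 (dyadic p k) [true] [false])) by (apply EJ_off; auto).
  rewrite (decide_true (EJ gamma 1 (dyadic p k) [true] [true])) by (apply EJ_diag; reflexivity).
  reflexivity.
Qed.

Lemma fold_max_one (f : nat -> nat) (l : list nat) : l <> [] -> (forall k, In k l -> f k = 1%nat) ->
  fold_right Nat.max 0%nat (map f l) = 1%nat.
Proof.
  induction l as [|a l IH]; intros Hne Hf. contradiction.
  simpl. rewrite (Hf a (or_introl eq_refl)). destruct l.
  - reflexivity.
  - rewrite IH. reflexivity. discriminate. intros k Hk. apply Hf. right. exact Hk.
Qed.

Theorem proposition5 (gamma : R) :
  1 / 2 < gamma < 1 ->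
  gamma ^ 3 <= sqrt 2 / 8 ->
  e_eq gamma 1 1.
Proof.
  intros Hg H3. pose proof (gamma_bound gamma Hg H3) as Hg2.
  assert (Hm : forall p, emax gamma 1 p = 1%nat).
  { intros p. unfold emax. apply fold_max_one.
    - assert (1 <= 2 ^ p)%nat. { clear. induction p; simpl; lia. }
      destruct (2 ^ p)%nat. lia. simpl. discriminate.
    - intros k Hk. apply in_seq in Hk. apply eJ_one. lra. lia. }
  unfold e_eq. intros eps He. exists 0%nat. intros n _. rewrite Hm. unfold Rdist.
  rewrite Rminus_diag, Rabs_R0. exact He.
Qed.
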